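(* Let $\mathcal{G}$ be a MAG and let $H,H'$ be heads with maximal vertex $i$. Suppose $K^m$ is a set with $H\to^{K^m}H'$ such that $K^m\subseteq K$ for every $K$ with $H\to^KH'$. Then for $\emptyset\ne K\subseteq H\setminus\{i\}$, we have $H\to^KH'$ if and only if $K=K^m\,\dot\cup\,B$ for some $B\subseteq H\setminus(H'\cup K^m)$.
   Context: A MAG is an acyclic directed mixed graph (directed and bidirected edges, no directed cycles) with $\mathrm{sib}(v)\cap\mathrm{an}(v)=\emptyset$ for all $v$ and in which every nonadjacent pair is m-separated by some set. Vertices are numbered topologically. $\mathrm{barren}_{\mathcal{G}'}(W)=\{w\in W:\mathrm{de}_{\mathcal{G}'}(w)\cap W=\{w\}\}$; a nonempty $H$ is a head if $\mathrm{barren}(H)=H$ and $H$ lies in one district of $\mathcal{G}_{\mathrm{an}(H)}$. For a head $H$ with maximal vertex $i$ and $\emptyset\ne K\subseteq H\setminus\{i\}$, $H\to^KH'$ means $H'=\mathrm{barren}_{\mathcal{G}'}(\mathrm{dis}_{\mathcal{G}'}(i))$ where $\mathcal{G}'=\mathcal{G}_{\mathrm{an}(H)\setminus K}$. $\dot\cup$ denotes disjoint union. *)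

(* Defs.v *)
From mathcomp Require Import all_boot.
Set Implicit Arguments. Unset Strict Implicit. Unset Printing Implicit Defensive.

Section MixedGraph.
Variable n : nat.
(* d u v : directed edge u -> v ;  b u v : bidirected edge u <-> v *)
Variables (d b : rel 'I_n).

(* restriction of a relation to a vertex set W (edges of the induced subgraph G_W) *)
Definition restr (e : rel 'I_n) (W : {set 'I_n}) : rel 'I_n :=
  fun x y => [&& e x y, x \in W & y \in W].

(* ancestors / descendants of v in the induced subgraph G_W (including v itself) *)
Definition anc (W : {set 'I_n}) (v : 'I_n) : {set 'I_n} :=
  [set u in W | (v \in W) && connect (restr d W) u v].
Definition desc (W : {set 'I_n}) (v : 'I_n) : {set 'I_n} :=
  [set u in W | (v \in W) && connect (restr d W) v u].
Definition ancS (W S : {set 'I_n}) : {set 'I_n} := \bigcup_(v in S) anc W v.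

Definition sib (v : 'I_n) : {set 'I_n} := [set u | b u v].

Definition dis (W : {set 'I_n}) (v : 'I_n) : {set 'I_n} :=
  [set u in W | (v \in W) && connect (restr b W) v u].

Definition barren (W S : {set 'I_n}) : {set 'I_n} :=
  [set w in S | desc W w :&: S == [set w]].

Definition adj (u v : 'I_n) : bool := [|| d u v, d v u | b u v].
Definition arrowhead_at (u v : 'I_n) : bool := d u v || b u v.

Definition mconnected (Z : {set 'I_n}) (x y : 'I_n) : Prop :=
  exists s : seq 'I_n,
    [/\ last x s = y, uniq (x :: s), path adj x s &
      forall k, 0 < k < (size (x :: s)).-1 ->
        let u := nth x (x :: s) k.-1 in
        let v := nth x (x :: s) k in
        let w := nth x (x :: s) k.+1 in
        if arrowhead_at u v && arrowhead_at w v
        then v \in ancS setT Z          (* collider: in an(Z) *)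
        else v \notin Z].              (* non-collider: not in Z *)

Definition mseparated (Z : {set 'I_n}) (x y : 'I_n) : Prop :=
  [/\ x \notin Z, y \notin Z & ~ mconnected Z x y].

Definition is_MAG : Prop :=
  [/\ (forall u v, b u v = b v u),
      (forall u v, d u v -> ~~ connect d v u),
      (forall v, sib v :&: anc setT v = set0)                    (* ancestral *)
    & (forall x y, x != y -> ~~ adj x y ->
         exists Z : {set 'I_n}, mseparated Z x y)].               (* maximal *)

Definition topological : Prop := forall u v, d u v -> (u < v)%N.

Definition is_head (H : {set 'I_n}) : Prop :=
  [/\ H != set0, barren setT H = H &
      exists v, H \subset dis (ancS setT H) v].

Definition max_vertex (H : {set 'I_n}) (i : 'I_n) : Prop :=
  i \in H /\ forall h, h \in H -> (h <= i)%N.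

(* H ->^K H' (i the maximal vertex of H) *)
Definition head_arrow (H : {set 'I_n}) (i : 'I_n) (K H' : {set 'I_n}) : Prop :=
  [/\ K != set0, K \subset H :\ i &
      let W := ancS setT H :\: K in H' = barren W (dis W i)].

End MixedGraph.

(* Main.v *)
Require Import Defs.
From mathcomp Require Import all_boot.

Section Aux.
Variable n : nat.

Lemma conn_mono (e : rel 'I_n) (W1 W2 : {set 'I_n}) x y :
  W1 \subset W2 -> connect (restr e W1) x y -> connect (restr e W2) x y.
Proof.
move=> sW; apply: connect_sub => u v /and3P[huv hu hv]; apply: connect1.
by rewrite /restr huv (subsetP sW _ hu) (subsetP sW _ hv).
Qed.

Lemma conn_in (e : rel 'I_n) (W : {set 'I_n}) x y :
  x \in W -> connect (restr e W) x y -> y \in W.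
Proof.
move=> xW /connectP[p]; elim: p x xW => [|z p IH] x xW /=; first by move=> _ ->.
by case/andP=> /and3P[_ _ zW] hp; apply: IH.
Qed.

Lemma conn_restrD (e : rel 'I_n) (W B : {set 'I_n}) x y :
  (forall v, connect (restr e W) x v -> connect (restr e W) v y -> v \notin B) ->
  connect (restr e W) x y -> connect (restr e (W :\: B)) x y.
Proof.
move=> hc /connectP[p]; elim: p x hc => [|z p IH] x hc /=; first by move=> _ ->.
case/andP=> hxz hp hl.
have xB : x \notin B by apply: hc => //; apply/connectP; exists (z :: p) => //=; rewrite hxz.
have zy : connect (restr e W) z y by apply/connectP; exists p.
have zB : z \notin B by apply: hc => //; apply: connect1.
apply: (connect_trans (y := z)).
  apply: connect1; move: hxz => /and3P[h1 h2 h3].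
  by rewrite /restr h1 !inE xB zB h2 h3.
apply: IH => // v zv vy; apply: hc => //.
exact: connect_trans (connect1 hxz) zv.
Qed.

Lemma conn_leq (d : rel 'I_n) (W : {set 'I_n}) x y : topological d ->
  connect (restr d W) x y -> x <= y.
Proof.
move=> top /connectP[p]; elim: p x => [|z p IH] x /=; first by move=> _ ->.
case/andP=> /and3P[hxz _ _] hp hl.
exact: leq_trans (ltnW (top _ _ hxz)) (IH _ hp hl).
Qed.

End Aux.

Theorem lemmaC3 (n : nat) (d b : rel 'I_n) (H H' Km : {set 'I_n}) (i : 'I_n) :
  is_MAG d b -> topological d ->
  is_head d b H -> is_head d b H' ->
  max_vertex H i -> max_vertex H' i ->
  head_arrow d b H i Km H' ->
  (forall K, head_arrow d b H i K H' -> Km \subset K) ->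
  forall K : {set 'I_n}, K != set0 -> K \subset H :\ i ->
    (head_arrow d b H i K H' <->
     exists B : {set 'I_n},
       [/\ B \subset H :\: (H' :|: Km), [disjoint Km & B] & K = Km :|: B]).
Proof.
move=> _ top [_ barH _] _ [iH _] [iH' _] [_ sKm defH'] minK K K0 sK.
set A := ancS d setT H.
have HA : H \subset A.
  apply/subsetP=> h hH; apply/bigcupP; exists h => //.
  by rewrite /anc !inE connect0.
have sink : forall (W : {set 'I_n}) bb z, W \subset A -> bb \in H ->
    connect (restr d W) bb z -> z = bb.
  move=> W bb z sWA bbH /connectP[[|y p]] /=; first by move=> _ ->.
  case/andP=> /and3P[hby _ yW] _ _; exfalso.
  have /bigcupP[h hH] := subsetP sWA _ yW.
  rewrite /anc !inE /= => yh.
  have bh : connect (restr d setT) bb h.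
    apply: connect_trans (connect1 _) yh; by rewrite /restr hby !inE.
  have [ehb|nhb] := eqVneq h bb.
    move: yh; rewrite ehb => /(conn_leq _ _ _ _ _ top); rewrite leqNgt (top _ _ hby).
    by [].
  have : bb \in barren d setT H by rewrite barH.
  rewrite /barren inE bbH /= => /eqP/setP/(_ h).
  by rewrite !inE hH bh (negbTE nhb).
split.
  move=> hK; have sKmK := minK K hK.
  case: hK => _ _ defH'K.
  exists (K :\: Km); split.
  - apply/subsetP=> x; rewrite !inE => /andP[xKm xK].
    rewrite (negbTE xKm) orbF.
    have := subsetP sK _ xK; rewrite !inE => /andP[_ ->]; rewrite andbT.
    apply/negP; rewrite defH'K /barren /dis !inE xK. by [].

  - rewrite -setI_eq0; apply/eqP/setP=> x; rewrite !inE.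
    by case: (x \in Km); rewrite ?andbF.
  - apply/setP=> x; rewrite !inE.
    case xKm: (x \in Km); last by [].
    by rewrite (subsetP sKmK _ xKm).
case=> B [sB dB eK].
split=> //; rewrite eK; cbv zeta; move: defH'; cbv zeta => defH'.
rewrite -/A in defH' *.
set WKm := A :\: Km.
have Wm : forall x, (x \in WKm) = (x \notin Km) && (x \in A).
  by move=> x; rewrite !inE.
have eW : A :\: (Km :|: B) = WKm :\: B.
  apply/setP=> x; rewrite !in_setD in_setU.
  by case: (x \in Km); case: (x \in B); case: (x \in A).
rewrite eW -/WKm in defH' *.
have sWKm : WKm \subset A by apply/subsetP=> x; rewrite Wm => /andP[].
clearbody WKm.
have BH : forall x, x \in B -> x \in H /\ x \notin H' /\ x \notin Km.
  move=> x /(subsetP sB); rewrite !inE negb_or => /andP[/andP[-> ->] ->] //.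
have iW : i \in WKm.
  rewrite Wm (subsetP HA _ iH) andbT.
  apply/negP=> /(subsetP sKm); by rewrite !inE eqxx.
have iB : i \notin B by apply/negP=> /BH [_ [/negP]].
set D := dis b WKm i.
have Dm : forall u, (u \in D) = (u \in WKm) && connect (restr b WKm) i u.
  by move=> u; rewrite /D /dis in_set iW.
rewrite -/D in defH'.
clearbody D.
have BD : forall x, x \in B -> x \notin D.
  move=> x xB; apply/negP=> xD.
  have [xH [xH' xKm]] := BH x xB.
  have xW : x \in WKm by rewrite Wm xKm (subsetP HA _ xH).
  move: xH'; rewrite defH' /barren in_set xD /=; apply/negP/negPn/eqP/setP=> u.
  rewrite in_setI in_set1; apply/andP/eqP.
    by case; rewrite /desc in_set => /andP[_ /andP[_ hu]] _; apply: (sink _ _ _ sWKm xH hu).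
  by move=> ->; rewrite xD /desc in_set xW connect0.
have eD : dis b (WKm :\: B) i = D.
  apply/setP=> u; apply/idP/idP.
    rewrite /dis in_set => /andP[/setDP[uW _] /andP[_ hc]].
    by rewrite Dm uW /=; exact: conn_mono (subsetDl _ _) hc.
  move=> uD; have uB : u \notin B by apply/negP=> /BD; rewrite uD.
  move: (uD); rewrite Dm => /andP[uW hc].
  rewrite /dis in_set; apply/andP; split; first by apply/setDP.
  apply/andP; split; first by apply/setDP.
  apply: conn_restrD hc => v iv _.
  by apply/negP=> /BD; rewrite Dm (conn_in _ _ _ _ _ iW iv) iv.
rewrite eD defH'; apply/setP=> w; rewrite /barren !in_set.
case wD: (w \in D) => //=.
have wB : w \notin B by apply/negP=> /BD; rewrite wD.
have wW : w \in WKm by move: wD; rewrite Dm => /andP[].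
suff -> : desc d (WKm :\: B) w :&: D = desc d WKm w :&: D by [].
apply/setP=> u; rewrite !in_setI /desc !in_set.
case uD: (u \in D); rewrite ?andbF // !andbT.
have uB : u \notin B by apply/negP=> /BD; rewrite uD.
have uW : u \in WKm by move: uD; rewrite Dm => /andP[].
have uWB : u \in WKm :\: B by apply/setDP.
have wWB : w \in WKm :\: B by apply/setDP.
rewrite uB wB uW wW /=; apply/idP/idP.
  by apply: conn_mono (subsetDl _ _).
apply: conn_restrD => v _ vu; apply/negP=> vB.
have [vH _] := BH v vB.
have := sink _ _ _ sWKm vH vu => euv.
by move: uB; rewrite euv vB.
Qed.
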